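(* For any connected graph $G$ of order $n\ge 3$, $3\le \gamma_{qtR}(G)\le n$. Moreover: (i) $\gamma_{qtR}(G)=3$ if and only if $G$ has maximum degree $n-1$; (ii) $\gamma_{qtR}(G)=4$ if and only if $\gamma(G)=\gamma_t(G)=2$; (iii) $\gamma_{qtR}(G)=n$ if and only if $G$ is a path or a cycle of order at least three.
   Context: All graphs are finite, simple and undirected; $\gamma(G)$ is the domination number and $\gamma_t(G)$ the total domination number (minimum size of a set $S$ such that every vertex has a neighbor in $S$). For $f:V(G)\to\{0,1,2\}$ write $V_i=\{v:f(v)=i\}$; weight $\omega(f)=|V_1|+2|V_2|$. A quasi-total Roman dominating function (QTRDF) is an $f$ such that every vertex labeled $0$ is adjacent to a vertex labeled $2$, and every vertex isolated in the subgraph induced by $V_1\cup V_2$ has label $1$; $\gamma_{qtR}(G)$ is the minimum weight of a QTRDF. *)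

(* Defs.v *)
(* A finite simple graph = symmetric irreflexive relation e on a finType T. *)
From mathcomp Require Import all_boot.
Set Implicit Arguments. Unset Strict Implicit. Unset Printing Implicit Defensive.

Section Graphs.
Variables (T : finType) (e : rel T).

Definition dominating (S : {set T}) : bool :=
  [forall v, (v \in S) || [exists u, e v u && (u \in S)]].

Definition total_dominating (S : {set T}) : bool :=
  [forall v, [exists u, e v u && (u \in S)]].

(* domination number (minimum over dominating sets; T itself dominates) *)
Definition dom_number : nat :=
  \big[minn/#|T|]_(S : {set T} | dominating S) #|S|.

(* total domination number (default #|T| is never used for graphs
   without isolated vertices, where T itself totally dominates) *)
Definition tdom_number : nat :=
  \big[minn/#|T|]_(S : {set T} | total_dominating S) #|S|.

Definition weight (f : {ffun T -> 'I_3}) : nat := \sum_(v : T) (f v : nat).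

Definition qtrdf (f : {ffun T -> 'I_3}) : bool :=
  [forall v, ((f v : nat) == 0) ==> [exists u, e v u && ((f u : nat) == 2)]] &&
  [forall v, (((f v : nat) != 0) && [forall u, e v u ==> ((f u : nat) == 0)])
              ==> ((f v : nat) == 1)].

(* quasi-total Roman domination number (the constant-1 function is a QTRDF,
   so the default value 2*#|T| is never attained) *)
Definition qtR_number : nat :=
  \big[minn/(2 * #|T|)]_(f : {ffun T -> 'I_3} | qtrdf f) weight f.

Definition degree (v : T) : nat := #|[set u | e v u]|.

Definition is_path_graph : Prop :=
  exists p : 'I_#|T| -> T, bijective p /\
    forall i j : 'I_#|T|, e (p i) (p j) = ((i : nat).+1 == j) || ((j : nat).+1 == i).

Definition is_cycle_graph : Prop :=
  exists p : 'I_#|T| -> T, bijective p /\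
    forall i j : 'I_#|T|, e (p i) (p j) =
      [|| (i : nat).+1 == j, (j : nat).+1 == i,
          ((i : nat) == 0) && ((j : nat) == #|T|.-1)
        | ((j : nat) == 0) && ((i : nat) == #|T|.-1)].

End Graphs.

(* Main.v *)
Require Import Defs.
From mathcomp Require Import all_boot.
From mathcomp Require Import zify.
From Stdlib Require Import Lia.
Set Implicit Arguments. Unset Strict Implicit. Unset Printing Implicit Defensive.

Lemma bigmin_le_seq (I : eqType) (r : seq I) (P : pred I) (F : I -> nat) d i :
  i \in r -> P i -> \big[minn/d]_(j <- r | P j) F j <= F i.
Proof.
elim: r => [//|x r IH]; rewrite inE big_cons => /orP[/eqP <-|ir] Pi.
  by rewrite Pi geq_minl.
case: (P x); last exact: IH.
by rewrite geq_min IH ?orbT.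
Qed.

Lemma bigmin_le (I : finType) (P : pred I) (F : I -> nat) d i :
  P i -> \big[minn/d]_(j | P j) F j <= F i.
Proof. by move=> Pi; apply: bigmin_le_seq => //; exact: mem_index_enum. Qed.

Lemma bigmin_attained (I : finType) (P : pred I) (F : I -> nat) d :
  (\big[minn/d]_(j | P j) F j = d) \/ exists2 i, P i & \big[minn/d]_(j | P j) F j = F i.
Proof.
pose Q m := (m == d) || [exists i, P i && (m == F i)].
have : Q (\big[minn/d]_(j | P j) F j).
  apply: (big_ind Q).
  - by rewrite /Q eqxx.
  - move=> x y Qx Qy; rewrite /minn; by case: ifP.
  - move=> i Pi; apply/orP; right; apply/existsP; exists i; by rewrite Pi eqxx.
case/orP => [/eqP ->|/existsP[i /andP[Pi /eqP ->]]]; first by left.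
by right; exists i.
Qed.

Definition o0 : 'I_3 := @Ordinal 3 0 isT.
Definition o1 : 'I_3 := @Ordinal 3 1 isT.
Definition o2 : 'I_3 := @Ordinal 3 2 isT.

Lemma ar1 p q : 0 < p -> 0 < q -> 2 + 1 + p + q <= 4 -> False.
Proof. lia. Qed.
Lemma ar3 p : 0 < p -> 2 + p + 2 <= 3 -> False.
Proof. lia. Qed.
Lemma ar4 p q : 2 + p + q <= 3 -> 0 < p -> q = 0.
Proof. lia. Qed.
Lemma ar2 p : 2 + 2 + p <= 4 -> p = 0.
Proof. lia. Qed.

Section G.
Variables (T : finType) (e : rel T).
Hypothesis e_sym : symmetric e.
Hypothesis e_irr : irreflexive e.
Hypothesis e_conn : forall x y : T, connect e x y.
Hypothesis n_ge3 : 3 <= #|T|.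

Lemma sum_ind (x : T) (c : nat) : \sum_(w : T) (if w == x then c else 0) = c.
Proof. by rewrite -big_mkcond big_pred1_eq. Qed.

Lemma sum_one : \sum_(w : T) 1 = #|T|.
Proof. by rewrite sum1_card. Qed.

Lemma cut_path (S : {set T}) x p : x \in S -> path e x p -> last x p \notin S ->
  exists a b, [/\ a \in S, b \notin S & e a b].
Proof.
elim: p x => [|y p IH] x xS /=; first by rewrite xS.
case/andP=> exy pyp lst.
case yS: (y \in S); first exact: IH yS pyp lst.
by exists x, y; rewrite yS.
Qed.

Lemma cut (S : {set T}) x y : x \in S -> y \notin S ->
  exists a b, [/\ a \in S, b \notin S & e a b].
Proof.
move=> xS yS; case/connectP: (e_conn x y) => p pp ly.
by apply: (cut_path xS pp); rewrite -ly.
Qed.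

Lemma has_nb x : exists y, e x y.
Proof.
have [y yx] : exists y, y != x.
  apply/existsP; rewrite -negb_forall; apply/negP => /forallP H.
  have : #|T| <= 1.
    rewrite -(card1 x); apply: subset_leq_card; apply/subsetP => z _.
    by rewrite inE; move: (H z) => /negPn.
  by move=> h; move: (leq_trans n_ge3 h).
have yS : y \notin [set x] by rewrite inE.
have [a [b [aS bS ab]]] := @cut [set x] x y (set11 x) yS.
by exists b; move: aS; rewrite inE => /eqP <-.
Qed.


Lemma sum_seq_le (F : T -> nat) (xs : seq T) : uniq xs ->
  \sum_(x <- xs) F x <= \sum_(w : T) F w.
Proof.
move=> u; rewrite big_uniq // big_mkcond /=.
by apply: leq_sum => i _; case: ifP.
Qed.

Lemma qtR_le (f : {ffun T -> 'I_3}) : qtrdf e f -> qtR_number e <= weight f.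
Proof. exact: bigmin_le. Qed.

Definition fone : {ffun T -> 'I_3} := [ffun=> o1].

Lemma fone_qt : qtrdf e fone.
Proof.
apply/andP; split; apply/forallP => v; apply/implyP; by rewrite /fone ffunE.
Qed.

Lemma fone_w : weight fone = #|T|.
Proof. by rewrite /weight -sum_one; apply: eq_bigr => v _; rewrite ffunE. Qed.

Lemma qtR_le_n : qtR_number e <= #|T|.
Proof. by rewrite -fone_w; apply: qtR_le; exact: fone_qt. Qed.

Lemma qtR_att : exists2 f, qtrdf e f & weight f = qtR_number e.
Proof.
case: (@bigmin_attained _ (@qtrdf T e) (@weight T) (2 * #|T|)) => [H|[f qf H]].
  have := qtR_le_n; rewrite /qtR_number H => h.
  have : 2 * #|T| <= 1 * #|T| by rewrite mul1n.
  rewrite leq_pmul2r; first by [].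
  exact: leq_trans n_ge3.
by exists f.
Qed.

Lemma qt0 (f : {ffun T -> 'I_3}) v : qtrdf e f -> (f v : nat) = 0 -> exists u, e v u /\ (f u : nat) = 2.
Proof.
case/andP => /forallP /(_ v) /implyP H _ fv.
have /existsP [u /andP [evu /eqP fu]] := H (introT eqP fv).
by exists u.
Qed.

Lemma qt2 (f : {ffun T -> 'I_3}) v : qtrdf e f -> (f v : nat) = 2 -> exists u, e v u /\ 0 < (f u : nat).
Proof.
case/andP => _ /forallP /(_ v) /implyP H fv.
have : ~~ [forall u, e v u ==> ((f u : nat) == 0)].
  apply/negP => K; have := H; rewrite fv /= K => /(_ isT); by [].
rewrite negb_forall => /existsP [u]; rewrite negb_imply => /andP [evu fu].
by exists u; rewrite lt0n.
Qed.

Lemma lab3 (f : {ffun T -> 'I_3}) v : [\/ (f v : nat) = 0, (f v : nat) = 1 | (f v : nat) = 2].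
Proof. by case: (f v) => [[|[|[|k]]] //= _]; [constructor 1|constructor 2|constructor 3]. Qed.

Lemma card_sum (P : pred T) : #|[set w | P w]| = \sum_(w : T) (P w : nat).
Proof.
rewrite -sum1_card big_mkcond /=; apply: eq_bigr => w _; rewrite inE; by case: (P w).
Qed.

Lemma weight_id (f : {ffun T -> 'I_3}) : weight f + #|[set w | (f w : nat) == 0]| = #|T| + #|[set w | (f w : nat) == 2]|.
Proof.
rewrite !card_sum -sum_one /weight -!big_split /=.
apply: eq_bigr => w _.
by case: (lab3 f w) => ->.
Qed.

Lemma qtR_ge_n_D2 (f : {ffun T -> 'I_3}) : qtrdf e f ->
  (forall v a b c, e v a -> e v b -> e v c -> [|| a == b, a == c | b == c]) ->
  #|T| <= weight f.
Proof.
move=> qf D.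
pose V0 := [set w | (f w : nat) == 0]; pose V2 := [set w | (f w : nat) == 2].
have: #|V0| <= #|V2|.
  have g : forall w, {u | (w \in V0) ==> (e w u && (u \in V2))}.
    move=> w; apply: sigW; case: (boolP (w \in V0)) => [|_]; last by exists w.
    rewrite inE => /eqP /(qt0 qf) [u [ewu fu]]; exists u; by rewrite ewu inE fu.
  pose h w := sval (g w).
  have hP w : w \in V0 -> e w (h w) && (h w \in V2).
    by move=> wV; have := svalP (g w); rewrite /h; move/implyP; apply.
  have -> : #|V0| = #|[set h w | w in V0]|.
    apply/esym/card_in_imset => x y xV yV hxy.
    case/andP: (hP x xV) => ex hx; case/andP: (hP y yV) => ey _.
    move: hx; rewrite inE => /eqP /(qt2 qf) [u [eu fu]].
    have ux : u != x by apply/eqP => ux; move: fu; rewrite ux; move: xV; rewrite inE => /eqP ->.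
    have uy : u != y by apply/eqP => uy; move: fu; rewrite uy; move: yV; rewrite inE => /eqP ->.
    apply/eqP; move: (D (h x) u x y eu); rewrite e_sym ex e_sym hxy ey /= => /(_ isT isT).
    by rewrite (negbTE ux) (negbTE uy).
  apply: subset_leq_card; apply/subsetP => z /imsetP [w wV ->].
  by case/andP: (hP w wV).
by move=> H; have := weight_id f; rewrite -/V0 -/V2 => W; rewrite -(leq_add2r #|V0|) W leq_add2l.
Qed.

Lemma no2 (f : {ffun T -> 'I_3}) : qtrdf e f -> (forall w, (f w : nat) != 2) -> weight f = #|T|.
Proof.
move=> qf H; rewrite /weight -sum_one; apply: eq_bigr => w _.
case: (lab3 f w) => [|//|fw]; last by move: (H w); rewrite fw.
move/(qt0 qf) => [u [_ fu]].
by move: (H u); rewrite fu.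
Qed.

Lemma qtR_ge3_f (f : {ffun T -> 'I_3}) : qtrdf e f -> 3 <= weight f.
Proof.
move=> qf; case: (boolP [exists v, (f v : nat) == 2]) => [/existsP [v /eqP fv]|].
  have [u [evu fu]] := qt2 qf fv.
  have uv : v != u by apply/eqP => vu; move: evu; rewrite vu e_irr.
  have := @sum_seq_le (fun w => (f w : nat)) [:: v; u]; rewrite /= inE uv => /(_ isT).
  rewrite !big_cons big_nil fv addn0 /weight => h; apply: leq_trans h.
  by rewrite ltnS.
rewrite negb_exists => /forallP H.
by rewrite (no2 qf H).
Qed.

Lemma qtR_ge3 : 3 <= qtR_number e.
Proof. by have [f qf <-] := qtR_att; exact: qtR_ge3_f. Qed.

Lemma D3small v a b c : e v a -> e v b -> e v c -> a != b -> a != c -> b != c ->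
  qtR_number e < #|T|.
Proof.
move=> ea eb ec ab ac bc.
have va : v != a by apply/eqP => h; move: ea; rewrite h e_irr.
have vb : v != b by apply/eqP => h; move: eb; rewrite h e_irr.
have vc : v != c by apply/eqP => h; move: ec; rewrite h e_irr.
pose f : {ffun T -> 'I_3} :=
  [ffun w => if w == v then o2 else if w == a then o1 else if e v w then o0 else o1].
have qf : qtrdf e f.
  apply/andP; split; apply/forallP => w; apply/implyP; rewrite !ffunE.
    case: (eqVneq w v) => // wv; case: (eqVneq w a) => // wa.
    case: ifP => // evw _; apply/existsP; exists v.
    by rewrite ffunE eqxx e_sym evw.
  case: (eqVneq w v) => [->|wv]; last by case: (eqVneq w a) => //; case: ifP.
  case/andP => _ /forallP /(_ a) /implyP /(_ ea); rewrite ffunE.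
  have av : (a == v) = false by rewrite eq_sym; apply: negbTE.
  by rewrite av eqxx.

apply: leq_ltn_trans (qtR_le qf) _.
have H : forall w, (f w : nat) + ((if w == b then 1 else 0) + (if w == c then 1 else 0))
                   <= 1 + (if w == v then 1 else 0).
  move=> w; rewrite ffunE.
  case: (eqVneq w v) => [->|wv]; first by rewrite (negbTE vb) (negbTE vc).
  case: (eqVneq w a) => [->|wa]; first by rewrite (negbTE ab) (negbTE ac).
  case: (eqVneq w b) => [->|wb]; first by rewrite eb (negbTE bc).
  case: (eqVneq w c) => [->|wc]; first by rewrite ec.
  by case: ifP.
have := @leq_sum _ (index_enum T) xpredT _ _ (fun w _ => H w).
rewrite !big_split /= !sum_ind sum_one /weight.
move: (\sum_(w : T) (f w : nat)) => s h; move: #|T| h => m h; lia.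
Qed.

Lemma degP v : degree e v = #|T| - 1 <-> (forall u, u != v -> e v u).
Proof.
have sub : [set u | e v u] \subset [set~ v].
  by apply/subsetP => u; rewrite !inE => evu; apply/eqP => uv; move: evu; rewrite uv e_irr.
split.
  move=> d u uv.
  have : [set u | e v u] =i [set~ v].
    by apply/(subset_cardP _ sub); rewrite cardsC1 -subn1.
  by move/(_ u); rewrite !inE uv.
move=> H; rewrite /degree.
have -> : [set u | e v u] = [set~ v].
  apply/eqP; rewrite eqEsubset sub /=; apply/subsetP => u; rewrite !inE; exact: H.
by rewrite cardsC1 subn1.
Qed.

Lemma card3 (a b c : T) : a != b -> a != c -> b != c -> #|[set a; b; c]| = 3.
Proof.
move=> ab ac bc; rewrite -setUA cardsU1 cards2 bc !inE negb_or ab ac; by [].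
Qed.

Lemma exists_out (A : {set T}) : #|A| < #|T| -> exists c, c \notin A.
Proof.
move=> h; apply/existsP; rewrite -negb_forall; apply/negP => /forallP H.
have : #|T| <= #|A| by apply: subset_leq_card; apply/subsetP => z _; exact: H.
by rewrite leqNgt h.
Qed.

Lemma part_i_1 (v : T) : (forall u, u != v -> e v u) -> qtR_number e <= 3.
Proof.
move=> H; have [a eva] := has_nb v.
have va : v != a by apply/eqP => h; move: eva; rewrite h e_irr.
pose f : {ffun T -> 'I_3} := [ffun w => if w == v then o2 else if w == a then o1 else o0].
have qf : qtrdf e f.
  apply/andP; split; apply/forallP => w; apply/implyP; rewrite !ffunE.
    case: (eqVneq w v) => // wv; case: (eqVneq w a) => // wa _.
    apply/existsP; exists v; by rewrite ffunE eqxx e_sym H.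
  case: (eqVneq w v) => [->|wv]; last by case: (eqVneq w a).
  case/andP => _ /forallP /(_ a) /implyP /(_ eva); rewrite ffunE.
  have av : (a == v) = false by rewrite eq_sym; apply: negbTE.
  by rewrite av eqxx.
apply: leq_trans (qtR_le qf) _.
have -> : weight f = \sum_(w : T) ((if w == v then 2 else 0) + (if w == a then 1 else 0)).
  apply: eq_bigr => w _; rewrite ffunE.
  case: (eqVneq w v) => [->|wv]; first by rewrite (negbTE va).
  by case: (eqVneq w a).
by rewrite big_split /= !sum_ind.
Qed.

Lemma sum3 (f : {ffun T -> 'I_3}) x y z : x != y -> x != z -> y != z ->
  (f x : nat) + (f y : nat) + (f z : nat) <= weight f.
Proof.
move=> xy xz yz.
have := @sum_seq_le (fun w => (f w : nat)) [:: x; y; z].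
rewrite /= !inE negb_or xy xz yz /= => /(_ isT).
by rewrite !big_cons big_nil addn0 addnA.
Qed.

Lemma sum4 (f : {ffun T -> 'I_3}) x y z t : x != y -> x != z -> y != z ->
  x != t -> y != t -> z != t ->
  (f x : nat) + (f y : nat) + (f z : nat) + (f t : nat) <= weight f.
Proof.
move=> xy xz yz xt yt zt.
have := @sum_seq_le (fun w => (f w : nat)) [:: x; y; z; t].
rewrite /= !inE !negb_or xy xz yz xt yt zt /= => /(_ isT).
by rewrite !big_cons big_nil addn0 !addnA.
Qed.

Lemma nb_ne (x y : T) : e x y -> x != y.
Proof. by move=> exy; apply/eqP => h; move: exy; rewrite h e_irr. Qed.

Lemma part_i_2 : qtR_number e = 3 -> exists v, forall u, u != v -> e v u.
Proof.
move=> q3; have [f qf wf] := qtR_att; rewrite q3 in wf.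
case: (boolP [exists v, (f v : nat) == 2]) => [/existsP [v /eqP fv]|].
  have [u [evu fu]] := qt2 qf fv.
  have vu := nb_ne evu.
  exists v => w wv; case: (eqVneq w u) => [->//|wu].
  have vw : v != w by rewrite eq_sym.
  have uw : u != w by rewrite eq_sym.
  have := sum3 f vu vw uw.
  rewrite wf fv => h3.
  have fw : (f w : nat) = 0 by exact: ar4 h3 fu.
  have [x [ewx fx]] := qt0 qf fw.
  case: (eqVneq x v) => [xv|xv]; first by rewrite e_sym -xv.
  case: (eqVneq x u) => [xu|xu].
    by move: h3; rewrite -xu fx.
  have vx : v != x by rewrite eq_sym.
  have ux : u != x by rewrite eq_sym.
  have := sum3 f vu vx ux.
  by rewrite wf fv fx => /(ar3 fu).
rewrite negb_exists => /forallP H.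
have n3 : #|T| = 3 by rewrite -(no2 qf H).
have [a] : exists a : T, True.
  have h0 : #|(set0 : {set T})| < #|T| by rewrite cards0; apply: leq_trans n_ge3.
  have [c _] := @exists_out set0 h0.
  by exists c.
move=> _; have [b eab] := has_nb a; have ab := nb_ne eab.
have [c] : exists c, c \notin [set a; b].
  apply: exists_out; rewrite n3 cards2 ab; by [].
rewrite !inE negb_or => /andP [ca cb].
have ac : a != c by rewrite eq_sym.
have bc : b != c by rewrite eq_sym.
have all3 : forall u, [|| u == a, u == b | u == c].
  move=> u; apply/negP => hu.
  have : #|u |: [set a; b; c]| <= #|T| by apply: max_card.
  rewrite cardsU1 card3 // n3 !inE.
  by move: hu; case: (u == a); case: (u == b); case: (u == c).
have [d ecd] := has_nb c; have cd := nb_ne ecd.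
case/or3P: (all3 d) => /eqP dd.
- exists a => u ua; case/or3P: (all3 u) => /eqP uu; rewrite uu.
  + by move: ua; rewrite uu eqxx.
  + exact: eab.
  + by rewrite e_sym -dd.
- exists b => u ub; case/or3P: (all3 u) => /eqP uu; rewrite uu.
  + by rewrite e_sym.
  + by move: ub; rewrite uu eqxx.
  + by rewrite e_sym -dd.
- by move: cd; rewrite dd eqxx.
Qed.

Lemma bigmin_ge (I : finType) (P : pred I) (F : I -> nat) d k :
  k <= d -> (forall i, P i -> k <= F i) -> k <= \big[minn/d]_(j | P j) F j.
Proof.
move=> kd H; apply: (big_ind (fun m => k <= m)) => //.
by move=> x y kx ky; rewrite leq_min kx ky.
Qed.

Definition universal (v : T) := forall u, u != v -> e v u.

Lemma inhab : exists x : T, True.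
Proof.
have h0 : #|(set0 : {set T})| < #|T| by rewrite cards0; apply: leq_trans n_ge3.
have [c _] := @exists_out set0 h0.
by exists c.
Qed.

Lemma small_set (S : {set T}) : #|S| < 2 -> S = set0 \/ exists v, S = [set v].
Proof.
case: (posnP #|S|) => [/cards0_eq ->|p]; first by left.
move=> h; right; apply/cards1P; apply/eqP; move: h p; move: #|S| => m; lia.
Qed.

Lemma tdom_ge2 : 2 <= tdom_number e.
Proof.
apply: bigmin_ge; first exact: leq_trans n_ge3.
move=> S /forallP tS; rewrite leqNgt; apply/negP => /small_set [E|[v E]]; subst S.
  have [x _] := inhab; have /existsP [u] := tS x; by rewrite inE andbF.
have /existsP [u] := tS v; rewrite inE => /andP [evu /eqP uv].
by move: evu; rewrite uv e_irr.
Qed.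

Lemma dom_ge2 : (forall v, ~ universal v) -> 2 <= dom_number e.
Proof.
move=> NU; apply: bigmin_ge; first exact: leq_trans n_ge3.
move=> S /forallP tS; rewrite leqNgt; apply/negP => /small_set [E|[v E]]; subst S.
  have [x _] := inhab; case/orP: (tS x); first by rewrite inE.
  by case/existsP => u; rewrite inE andbF.
apply: (NU v) => u uv; case/orP: (tS u); first by rewrite inE (negbTE uv).
by case/existsP => w /andP [euw]; rewrite inE => /eqP wv; rewrite e_sym -wv.
Qed.

Lemma twodom a b : (forall w, e w a || e w b) -> (forall v, ~ universal v) ->
  dom_number e = 2 /\ tdom_number e = 2.
Proof.
move=> H NU.
have ab : a != b by case/orP: (H a); [rewrite e_irr | exact: nb_ne].
have tS : total_dominating e [set a; b].
  apply/forallP => w; apply/existsP; case/orP: (H w) => h.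
    by exists a; rewrite h !inE eqxx.
  by exists b; rewrite h !inE eqxx orbT.
have c2 : #|[set a; b]| = 2 by rewrite cards2 ab.
have dS : dominating e [set a; b].
  apply/forallP => w; apply/orP; right; exact: (forallP tS w).
split; apply/eqP; rewrite eqn_leq.
  by rewrite dom_ge2 // andbT -{1}c2; apply: bigmin_le.
by rewrite tdom_ge2 andbT -{1}c2; apply: bigmin_le.
Qed.

Lemma univ_dom v : universal v -> dom_number e <= 1.
Proof.
move=> U; rewrite -(cards1 v); apply: bigmin_le.
apply/forallP => w; case: (eqVneq w v) => [->|wv]; first by rewrite inE eqxx.
apply/orP; right; apply/existsP; exists v; by rewrite inE eqxx e_sym U.
Qed.

Lemma part_ii_1 : dom_number e = 2 -> tdom_number e = 2 -> qtR_number e = 4.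
Proof.
move=> d2 t2.
have NU : forall v, ~ universal v by move=> v /univ_dom; rewrite d2.
have ge4 : 4 <= qtR_number e.
  have := qtR_ge3; rewrite leq_eqVlt => /orP [/eqP h|//].
  by have [v /NU] := part_i_2 (esym h).
apply/eqP; rewrite eqn_leq ge4 andbT.
case: (@bigmin_attained _ (@total_dominating T e) (fun S => #|S|) #|T|) => [h|[S tS h]].
  by move: t2; rewrite /tdom_number h => h'; move: n_ge3; rewrite h'.
have cS : #|S| = 2 by rewrite -h.
pose f : {ffun T -> 'I_3} := [ffun w => if w \in S then o2 else o0].
have qf : qtrdf e f.
  apply/andP; split; apply/forallP => w; apply/implyP; rewrite !ffunE.
    case: ifP => // _ _; have /existsP [u /andP [ewu uS]] := forallP tS w.
    by apply/existsP; exists u; rewrite ewu ffunE uS.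
  case: ifP => // wS /andP [_ /forallP K].
  have /existsP [u /andP [ewu uS]] := forallP tS w.
  by move: (K u); rewrite ewu ffunE uS.
apply: leq_trans (qtR_le qf) _.
have -> : weight f = \sum_(w in S) 2.
  rewrite /weight [RHS]big_mkcond /=; apply: eq_bigr => w _; rewrite ffunE.
  by case: ifP.
by rewrite sum_nat_const cS.
Qed.

Definition D2 := forall v a b c, e v a -> e v b -> e v c -> [|| a == b, a == c | b == c].

Lemma D2_of_n : qtR_number e = #|T| -> D2.
Proof.
move=> qn v a b c ea eb ec; apply/negPn/negP; rewrite !negb_or => /and3P [ab ac bc].
by have := D3small ea eb ec ab ac bc; rewrite qn ltnn.
Qed.

Definition adj (x0 : T) (s : seq T) := forall i, i.+1 < size s -> e (nth x0 s i) (nth x0 s i.+1).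

Lemma ham_ext (D : D2) x0 s : uniq s -> adj x0 s -> 0 < size s -> size s < #|T| ->
  exists s', [/\ uniq s', adj x0 s' & size s' = (size s).+1].
Proof.
move=> us ad s0 sn.
have [y yS] : exists y, y \notin [set x in s].
  apply: exists_out; apply: leq_ltn_trans sn; rewrite cardsE; exact: card_size.
have xS : nth x0 s 0 \in [set x in s] by rewrite inE mem_nth.
have [a [b [aS bS eab]]] := cut xS yS.
move: aS bS; rewrite !inE => aS bS.
have ai : nth x0 s (index a s) = a by exact: nth_index.
have il : index a s < size s by rewrite index_mem.
have bn : forall k, k < size s -> nth x0 s k != b.
  by move=> k ks; apply/eqP => h; move: bS; rewrite -h mem_nth.
case: (eqVneq (index a s).+1 (size s)) => [lst|nlast].
  exists (rcons s b); split.
  - by rewrite rcons_uniq bS us.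
  - move=> j; rewrite size_rcons ltnS => js; rewrite !nth_rcons js.
    case: (ltnP j.+1 (size s)) => [h|js2]; first exact: ad h.
    have jE : j.+1 = size s by apply/eqP; rewrite eqn_leq js js2.
    rewrite jE eqxx; rewrite -lst in jE; case: jE => ->; by rewrite ai.
  - by rewrite size_rcons.
case: (posnP (index a s)) => [i0|ipos].
  exists (b :: s); split.
  - by rewrite /= bS us.
  - move=> [|j] /= js; first by rewrite e_sym -i0 ai.
    exact: ad.
  - by [].
exfalso.
set i := index a s in ai il nlast ipos.
have i1 : i.-1.+1 = i by rewrite prednK.
have e1 : e a (nth x0 s i.-1) by rewrite e_sym -ai -{2}i1; apply: ad; rewrite i1.
have i2 : i.+1 < size s by rewrite ltn_neqAle nlast il.
have e2 : e a (nth x0 s i.+1) by rewrite -ai; apply: ad.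
have := D _ _ _ _ e1 e2 eab; rewrite (negbTE (bn _ i2)) (negbTE (bn i.-1 _)) ?orbF; last by apply: leq_ltn_trans il; exact: leq_pred.
rewrite nth_uniq //; last by apply: leq_ltn_trans il; exact: leq_pred.
move: ipos; move: (i) => k; lia.
Qed.

Lemma ham (D : D2) x0 : exists s, [/\ uniq s, adj x0 s & size s = #|T|].
Proof.
suff H : forall k, 0 < k <= #|T| -> exists s, [/\ uniq s, adj x0 s & size s = k].
  by apply: H; rewrite leqnn andbT; apply: leq_trans n_ge3.
elim=> [//|[|k] IH] /andP [_ kn].
  by exists [:: x0]; split => // i.
have [s [us ad ss]] := IH (ltnW kn).
have s0 : 0 < size s by rewrite ss.
have sn : size s < #|T| by rewrite ss.
have [s' [us' ad' ss']] := ham_ext D us ad s0 sn.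
by exists s'; rewrite ss' ss.
Qed.

Lemma edges (D : D2) x0 s : uniq s -> adj x0 s ->
  forall i j, i < j -> j < size s -> e (nth x0 s i) (nth x0 s j) ->
  j = i.+1 \/ (i = 0 /\ j = (size s).-1).
Proof.
move=> us ad i j ij js eij.
have nn : forall k l, k < size s -> l < size s -> k != l -> (nth x0 s k == nth x0 s l) = false.
  by move=> k l ks ls kl; rewrite nth_uniq // (negbTE kl).
case: (eqVneq j i.+1) => [->|ji]; first by left.
have i2 : i.+2 <= j by rewrite ltn_neqAle eq_sym ji ij.
case: (posnP i) => [i0|ipos].
  case: (eqVneq j (size s).-1) => [->|jl]; first by right.
  exfalso.
  have j1 : j.+1 < size s by move: jl js; move: (size s) => m; lia.
  have jp : j.-1.+1 = j by move: i2; move: (j) => m; lia.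
  have e1 : e (nth x0 s j) (nth x0 s j.-1) by have := ad j.-1; rewrite jp e_sym; apply.
  have e2 : e (nth x0 s j) (nth x0 s j.+1) by apply: ad.
  have e3 : e (nth x0 s j) (nth x0 s 0) by rewrite e_sym -i0.
  have := D _ _ _ _ e1 e2 e3.
  rewrite !nn //; move: i0 i2 js j1; move: (size s) (j) => m k; lia.
exfalso.
have ip : i.-1.+1 = i by move: ipos; move: (i) => m; lia.
have e1 : e (nth x0 s i) (nth x0 s i.-1).
  have := ad i.-1; rewrite ip e_sym; apply; move: ij js; move: (size s) => m; lia.
have e2 : e (nth x0 s i) (nth x0 s i.+1) by apply: ad; move: ij i2 js; move: (size s) => m; lia.
have := D _ _ _ _ e1 e2 eij.
rewrite !nn //; move: ipos ij i2 js; move: (size s) (j) (i) => m k l; lia.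
Qed.

Lemma edge_formula (D : D2) x0 s : uniq s -> adj x0 s ->
  forall i j, i < size s -> j < size s ->
  e (nth x0 s i) (nth x0 s j) =
  [|| i.+1 == j, j.+1 == i |
   e (nth x0 s 0) (nth x0 s (size s).-1) &&
   (((i == 0) && (j == (size s).-1)) || ((j == 0) && (i == (size s).-1)))].
Proof.
move=> us ad i j iS js; apply/idP/idP.
  move=> eij; case: (ltngtP i j) => [ij|ji|ij].
  - case: (edges D us ad ij js eij) => [->|[i0 jl]]; first by rewrite eqxx.
    by rewrite -jl -i0 eij i0 jl !eqxx !orbT.
  - rewrite e_sym in eij.
    case: (edges D us ad ji iS eij) => [->|[j0 il]]; first by rewrite eqxx orbT.
    by rewrite -il -j0 eij j0 il !eqxx !orbT.
  - by move: eij; rewrite ij e_irr.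
case/or3P => [/eqP E|/eqP E|/andP [ec /orP [/andP [/eqP -> /eqP ->]|/andP [/eqP -> /eqP ->]]]].
- by subst j; apply: ad.
- by subst i; rewrite e_sym; apply: ad.
- exact: ec.
- by rewrite e_sym.
Qed.

Lemma D2_pc (D : D2) : is_path_graph e \/ is_cycle_graph e.
Proof.
have [x0 _] := inhab.
have [s [us ad ss]] := ham D x0.
pose p (i : 'I_#|T|) := nth x0 s i.
have pinj : injective p.
  move=> i j /eqP; rewrite /p nth_uniq ?ss // => /eqP h; exact: val_inj.
have pc : #|T| <= #|'I_#|T| | by rewrite card_ord.
have pbij : bijective p := inj_card_bij pinj pc.
have F := edge_formula D us ad.
case ec: (e (nth x0 s 0) (nth x0 s (size s).-1)).
  rewrite ss in ec.
  right; exists p; split => // i j; rewrite /p F ?ss // ec /=.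
  by [].
rewrite ss in ec.
left; exists p; split => // i j; rewrite /p F ?ss // ec /= orbF.
by [].
Qed.

Lemma D2_n (D : D2) : qtR_number e = #|T|.
Proof.
apply/eqP; rewrite eqn_leq qtR_le_n /=.
have [f qf <-] := qtR_att; exact: qtR_ge_n_D2 qf D.
Qed.

Lemma two_nb_D2 (p : 'I_#|T| -> T) : bijective p ->
  (forall i, exists X Y, forall j, e (p i) (p j) -> ((j : nat) == X) || ((j : nat) == Y)) -> D2.
Proof.
move=> [g pg gp] H v a b c eva evb evc.
have [X [Y HXY]] := H (g v).
have ha := HXY (g a); have hb := HXY (g b); have hc := HXY (g c).
rewrite !gp in ha hb hc.
have key : forall x y, (g x : nat) == (g y : nat) -> x == y.
  by move=> x y /eqP /val_inj h; rewrite -(gp x) h gp.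
have := ha eva; have := hb evb; have := hc evc.
move: (g a : nat) (g b : nat) (g c : nat) (key a b) (key a c) (key b c) => ka kb kc.
case: (a == b); case: (a == c); case: (b == c) => //=; lia.
Qed.

Lemma pc_D2 : is_path_graph e \/ is_cycle_graph e -> D2.
Proof.
case=> [[p [bp H]]|[p [bp H]]]; apply: (two_nb_D2 bp) => i.
  exists (i : nat).+1, (i : nat).-1 => j; rewrite H; lia.
exists (if (i : nat) == #|T|.-1 then 0 else (i : nat).+1), (if (i : nat) == 0 then #|T|.-1 else (i : nat).-1).
move=> j; rewrite H; clear H bp p.
case: i => a ha; case: j => b hb /=.
move: #|T| ha hb => m ha hb; case: ifP; case: ifP; lia.
Qed.

Lemma in_ham (s : seq T) : uniq s -> size s = #|T| -> forall w, w \in s.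
Proof.
move=> us ss w; apply/negPn/negP => ws.
have : #|w |: [set x in s]| <= #|T| by apply: max_card.
rewrite cardsU1 inE ws cardsE (card_uniqP us) ss; by rewrite ltnn.
Qed.

Lemma part_ii_2 : qtR_number e = 4 -> dom_number e = 2 /\ tdom_number e = 2.
Proof.
move=> q4.
have NU : forall v, ~ universal v by move=> v /part_i_1; rewrite q4.
have [f qf wf] := qtR_att; rewrite q4 in wf.
case: (boolP [exists v, (f v : nat) == 2]) => [/existsP [v /eqP fv]|].
  have [u [evu fu]] := qt2 qf fv.
  have vu := nb_ne evu.
  have S3 : forall w, w != v -> w != u -> 2 + (f u : nat) + (f w : nat) <= 4.
    move=> w wv wu; have vw : v != w by rewrite eq_sym.
    have uw : u != w by rewrite eq_sym.
    by have := sum3 f vu vw uw; rewrite fv wf.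
  case: (lab3 f u) => [fu0|fu1|fu2]; first by move: fu; rewrite fu0.
    have adj0 : forall w, (f w : nat) = 0 -> e w v.
      move=> w fw; have [x [ewx fx]] := qt0 qf fw.
      case: (eqVneq x v) => [<-//|xv].
      have xu : x != u by apply/eqP => xu; move: fx; rewrite xu fu1.
      by move: (S3 x xv xu); rewrite fu1 fx.
    have [u2 /andP [u2v nu2]] : exists u2, (u2 != v) && ~~ e v u2.
      case: (boolP [exists u2, (u2 != v) && ~~ e v u2]) => [/existsP //|].
      rewrite negb_exists => /forallP K; exfalso.
      apply: (NU v) => w wv; move: (K w); rewrite wv /=; by move/negPn.
    have u2u : u2 != u by apply/eqP => h; move: nu2; rewrite h evu.
    have fu2 : 0 < (f u2 : nat).
      rewrite lt0n; apply/eqP => /adj0; rewrite e_sym; by apply/negP.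
    have oth : forall w, w != v -> w != u2 -> e w v.
      move=> w wv wu2; case: (eqVneq w u) => [->|wu]; first by rewrite e_sym.
      case: (posnP (f w : nat)) => [/adj0 //|fwp]; exfalso.
      have v2 : v != u2 by rewrite eq_sym.
      have vw : v != w by rewrite eq_sym.
      have uw : u != w by rewrite eq_sym.
      have u2w : u2 != w by rewrite eq_sym.
      have uu2 : u != u2 by rewrite eq_sym.
      have := @sum4 f v u u2 w vu v2 uu2 vw uw u2w.
      by rewrite wf fv fu1; apply: ar1.
    have [x eu2x] := has_nb u2.
    have xv : x != v by apply/eqP => h; move: eu2x; rewrite h e_sym; apply/negP.
    have xu2 : x != u2 by rewrite eq_sym; apply: nb_ne.
    apply: (@twodom v x) => // w.
    case: (eqVneq w v) => [->|wv]; first by rewrite (e_sym v x) (oth x xv xu2) orbT.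
    case: (eqVneq w u2) => [->|wu2]; first by rewrite eu2x orbT.
    by rewrite oth.
  have oth : forall w, w != v -> w != u -> (f w : nat) = 0.
    by move=> w wv wu; move: (S3 w wv wu); rewrite fu2; apply: ar2.
  apply: (@twodom v u) => // w.
  case: (eqVneq w v) => [->|wv]; first by rewrite evu orbT.
  case: (eqVneq w u) => [->|wu]; first by rewrite e_sym evu.
  have [x [ewx fx]] := qt0 qf (oth w wv wu).
  case: (eqVneq x v) => [<-|xv]; first by rewrite ewx.
  case: (eqVneq x u) => [<-|xu]; first by rewrite ewx orbT.
  by move: (oth x xv xu); rewrite fx.
rewrite negb_exists => /forallP H.
have n4 : #|T| = 4 by rewrite -(no2 qf H).
have D : D2 by apply: D2_of_n; rewrite q4 n4.
have [x0 _] := inhab.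
have [s [us ad ss]] := ham D x0.
apply: (@twodom (nth x0 s 1) (nth x0 s 2)) => // w.
have ws := in_ham us ss w.
rewrite -(nth_index x0 ws).
have : index w s < 4 by rewrite -n4 -ss index_mem.
move: (index w s) => [|[|[|[|k]]]] // _.
- by rewrite ad // ss n4.
- by rewrite ad ?orbT // ss n4.
- by rewrite e_sym ad // ss n4.
- by apply/orP; right; rewrite e_sym; apply: ad; rewrite ss n4.
Qed.

Lemma main_sec :
  3 <= qtR_number e /\ qtR_number e <= #|T| /\
  (qtR_number e = 3 <-> exists v : T, degree e v = #|T| - 1) /\
  (qtR_number e = 4 <-> dom_number e = 2 /\ tdom_number e = 2) /\
  (qtR_number e = #|T| <-> is_path_graph e \/ is_cycle_graph e).
Proof.
split; first exact: qtR_ge3.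
split; first exact: qtR_le_n.
split.
  split.
    by move=> /part_i_2 [v U]; exists v; apply/degP.
  move=> [v /degP /part_i_1 h]; apply/eqP; rewrite eqn_leq h; exact: qtR_ge3.
split.
  split; first exact: part_ii_2.
  by case=> ??; apply: part_ii_1.
split.
  by move/D2_of_n; exact: D2_pc.
by move/pc_D2; exact: D2_n.
Qed.

End G.

Theorem mainTheorem7 (T : finType) (e : rel T)
    (e_sym : symmetric e) (e_irr : irreflexive e)
    (e_conn : forall x y : T, connect e x y)
    (n_ge3 : 3 <= #|T|) :
  3 <= qtR_number e /\ qtR_number e <= #|T| /\
  (qtR_number e = 3 <-> exists v : T, degree e v = #|T| - 1) /\
  (qtR_number e = 4 <-> dom_number e = 2 /\ tdom_number e = 2) /\
  (qtR_number e = #|T| <-> is_path_graph e \/ is_cycle_graph e).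
Proof. exact: (@main_sec T e e_sym e_irr e_conn n_ge3). Qed.
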